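(* Let $U=2^J\cdot3^3$ with $5\le J\ll1$ and $W=U\prod_{5\le p\le w}p$ with $10^{10^{10}}\le w\ll1$, let $b$ be an integer such that $Wn+b$ is amenable, let $Q\ge1$, and let $\mathcal{Q}=\{c_0\bmod Q:\ (Wc_0+b,Q)=(Wc_0+b-1,s(Q))=1\}$. Let $a$ and $q\mid Q$ be positive integers with $(a,q)=1$ and $q\ne1$. Then $$\Bigg|\sum_{c_0\in\mathcal{Q}}e\Big(\frac aqc_0\Big)\Bigg|\le w^{-1/2}|\mathcal{Q}|.$$
   Context: $e(t)=e^{2\pi it}$. $s(n)=\prod_{p\mid n,\ p\equiv-1\ (4),\ p\ne3}p$. A linear polynomial $Kn+b$ ($K\ge1$) is amenable if (i) $6^3\mid K$; (ii) $(b,K)=(b-1,s(K))=1$; (iii) $b-1=2^j3^{2t}(4h+1)$ for some $h\in\mathbb{Z}$ with $3\nmid4h+1$ and $j,t\ge0$ with $2^{j+2}3^{2t+1}\mid K$. *)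

(* Defs.v *)
From Stdlib Require Import Reals ZArith Znumtheory List Lia Lra Bool.
From Coquelicot Require Import Coquelicot.
Import ListNotations.
Open Scope Z_scope.

Definition primeb (p : Z) : bool := if prime_dec p then true else false.

Definition zrange (lo n : Z) : list Z :=
  map (fun k => lo + Z.of_nat k) (seq 0 (Z.to_nat n)).

Definition zprod (l : list Z) : Z := fold_right Z.mul 1 l.

Definition s (n : Z) : Z :=
  zprod (filter (fun p => primeb p && (n mod p =? 0) && (p mod 4 =? 3)
                          && negb (p =? 3))
                (zrange 2 (Z.abs n - 1))).

(* K n + b is amenable *)
Definition amenable (K b : Z) : Prop :=
  1 <= K /\
  (6 ^ 3 | K) /\
  Z.gcd b K = 1 /\ Z.gcd (b - 1) (s K) = 1 /\
  exists (h : Z) (j t : nat),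
    b - 1 = 2 ^ Z.of_nat j * 3 ^ (2 * Z.of_nat t) * (4 * h + 1) /\
    ~ (3 | 4 * h + 1) /\
    (2 ^ (Z.of_nat j + 2) * 3 ^ (2 * Z.of_nat t + 1) | K).

Definition U (J : nat) : Z := 2 ^ Z.of_nat J * 3 ^ 3.

(* W = U * prod_{5 <= p <= w, p prime} p ; p <= w iff p <= floor w *)
Definition W (J : nat) (w : R) : Z :=
  U J * zprod (filter primeb (zrange 5 (Int_part w - 4))).

(* the residues c0 mod Q (represented by 0..Q-1) in the set \mathcal{Q} *)
Definition Qset (Wv b Q : Z) : list Z :=
  filter (fun c0 => (Z.gcd (Wv * c0 + b) Q =? 1)
                    && (Z.gcd (Wv * c0 + b - 1) (s Q) =? 1))
         (zrange 0 Q).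

Open Scope R_scope.

Definition e (t : R) : C := (cos (2 * PI * t), sin (2 * PI * t)).

Definition Csum (l : list Z) (f : Z -> C) : C :=
  fold_right (fun c acc => Cplus (f c) acc) (RtoC 0) l.

(* Main.v *)
Require Import Defs.
From Stdlib Require Import Reals ZArith Znumtheory List Lia Lra Permutation Bool.
From Coquelicot Require Import Coquelicot.

Open Scope R_scope.

Definition Rs (l : list Z) (g : Z -> R) : R :=
  fold_right (fun c acc => g c + acc) 0 l.

Lemma Csum_perm l l' f : Permutation l l' -> Csum l f = Csum l' f.
Proof.
  induction 1; simpl; auto.
  - rewrite IHPermutation; auto.
  - ring.
  - congruence.
Qed.

Lemma Rs_perm l l' f : Permutation l l' -> Rs l f = Rs l' f.
Proof.
  induction 1; simpl; auto.
  - rewrite IHPermutation; auto.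
  - ring.
  - congruence.
Qed.

Lemma Csum_map l g f : Csum (map g l) f = Csum l (fun x => f (g x)).
Proof. induction l; simpl; congruence. Qed.

Lemma Rs_map l g f : Rs (map g l) f = Rs l (fun x => f (g x)).
Proof. induction l; simpl; congruence. Qed.

Lemma Csum_ext l f g : (forall x, In x l -> f x = g x) -> Csum l f = Csum l g.
Proof.
  induction l; simpl; intros H; auto.
  rewrite H by auto. rewrite IHl; auto.
Qed.

Lemma Rs_ext l f g : (forall x, In x l -> f x = g x) -> Rs l f = Rs l g.
Proof.
  induction l; simpl; intros H; auto.
  rewrite H by auto. rewrite IHl; auto.
Qed.

Lemma Csum_scal l f z : Csum l (fun x => (z * f x)%C) = (z * Csum l f)%C.
Proof. induction l; simpl. ring. rewrite IHl. ring. Qed.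

Lemma Csum_minus l f g : Csum l (fun x => (f x - g x)%C) = (Csum l f - Csum l g)%C.
Proof. induction l; simpl. ring. rewrite IHl. ring. Qed.

Lemma Rs_minus l f g : Rs l (fun x => f x - g x) = Rs l f - Rs l g.
Proof. induction l; simpl. ring. rewrite IHl. ring. Qed.

Lemma Rs_plus l f g : Rs l (fun x => f x + g x) = Rs l f + Rs l g.
Proof. induction l; simpl. ring. rewrite IHl. ring. Qed.

Lemma Rs_const l k : Rs l (fun _ => k) = INR (length l) * k.
Proof. induction l; simpl length; rewrite ?S_INR; simpl; [ring|]. rewrite IHl. ring. Qed.

Lemma Rs_nonneg l f : (forall x, 0 <= f x) -> 0 <= Rs l f.
Proof. intros H; induction l; simpl. lra. specialize (H a). lra. Qed.

Lemma Rs_le l f g : (forall x, f x <= g x) -> Rs l f <= Rs l g.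
Proof. intros H; induction l; simpl. lra. specialize (H a). lra. Qed.

Lemma Rs_swap l m (g : Z -> Z -> R) :
  Rs l (fun x => Rs m (g x)) = Rs m (fun y => Rs l (fun x => g x y)).
Proof.
  induction l; simpl.
  - induction m; simpl; auto. rewrite <- IHm. ring.
  - rewrite IHl. rewrite <- Rs_plus. reflexivity.
Qed.

Lemma Csum_filter l (P : Z -> bool) f :
  Csum (filter P l) f = Csum l (fun x => if P x then f x else RtoC 0).
Proof. induction l; simpl; auto. destruct (P a); simpl; rewrite IHl; auto. ring. Qed.

Lemma length_filter_Rs l (P : Z -> bool) :
  INR (length (filter P l)) = Rs l (fun x => if P x then 1 else 0).
Proof.
  induction l; simpl; auto. destruct (P a); simpl length; rewrite ?S_INR, IHl; ring.
Qed.

Lemma Cmod_Csum l f : Cmod (Csum l f) <= Rs l (fun x => Cmod (f x)).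
Proof.
  induction l; simpl. rewrite Cmod_0. lra.
  eapply Rle_trans. apply Cmod_triangle. lra.
Qed.

Lemma e_add x y : e (x + y) = (e x * e y)%C.
Proof.
  unfold e, Cmult; simpl.
  replace (2 * PI * (x + y)) with (2 * PI * x + 2 * PI * y) by ring.
  rewrite cos_plus, sin_plus. f_equal; ring.
Qed.

Lemma e_int k : e (IZR k) = RtoC 1.
Proof.
  unfold e, RtoC.
  assert (Hs : sin (IZR k * PI) = 0) by (apply sin_eq_0_1; eauto).
  replace (2 * PI * IZR k) with (2 * (IZR k * PI)) by ring.
  rewrite cos_2a_sin, Hs.
  rewrite sin_2a, Hs. f_equal; ring.
Qed.

Lemma e_one_int x : e x = RtoC 1 -> exists k, x = IZR k.
Proof.
  unfold e, RtoC. intros H. injection H as H1 H2.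
  replace (2 * PI * x) with (2 * (x * PI)) in H1 by ring.
  rewrite cos_2a_sin in H1.
  assert (Hs : sin (x * PI) = 0) by nra.
  destruct (sin_eq_0_0 _ Hs) as [k Hk]. exists k.
  assert (PI > 0) by apply PI_RGT_0.
  apply Rmult_eq_reg_r with PI; lra.
Qed.

Lemma Cmod_e x : Cmod (e x) = 1.
Proof.
  unfold e, Cmod; simpl.
  pose proof (sin2_cos2 (2 * PI * x)) as H. unfold Rsqr in H.
  replace (cos (2 * PI * x) * (cos (2 * PI * x) * 1) +
     sin (2 * PI * x) * (sin (2 * PI * x) * 1)) with 1 by lra.
  apply sqrt_1.
Qed.
Open Scope Z_scope.

Lemma In_zrange x lo n : In x (zrange lo n) <-> lo <= x < lo + n.
Proof.
  unfold zrange. rewrite in_map_iff. split.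
  - intros [k [Hk Hin]]. apply in_seq in Hin. lia.
  - intros H. exists (Z.to_nat (x - lo)). split. lia. apply in_seq. lia.
Qed.

Lemma zrange_length lo n : length (zrange lo n) = Z.to_nat n.
Proof. unfold zrange. rewrite length_map, length_seq. reflexivity. Qed.

Lemma NoDup_zrange lo n : NoDup (zrange lo n).
Proof.
  unfold zrange. apply FinFun.Injective_map_NoDup. intros x y H. lia.
  apply seq_NoDup.
Qed.

Lemma shift_perm Q d : 1 <= Q ->
  Permutation (zrange 0 Q) (map (fun c => (c + d) mod Q) (zrange 0 Q)).
Proof.
  intros HQ. apply NoDup_Permutation_bis.
  - apply NoDup_zrange.
  - rewrite length_map. lia.
  - intros x Hx. apply In_zrange in Hx. apply in_map_iff.
    exists ((x - d) mod Q). split.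
    + rewrite Zplus_mod_idemp_l. replace (x - d + d) with x by ring.
      apply Z.mod_small. lia.
    + apply In_zrange. pose proof (Z.mod_pos_bound (x - d) Q). lia.
Qed.

Lemma Csum_shift Q d f : 1 <= Q ->
  Csum (zrange 0 Q) f = Csum (zrange 0 Q) (fun c => f ((c + d) mod Q)).
Proof. intros. rewrite (Csum_perm _ _ f (shift_perm Q d H)). apply Csum_map. Qed.

Lemma Rs_shift Q d f : 1 <= Q ->
  Rs (zrange 0 Q) f = Rs (zrange 0 Q) (fun c => f ((c + d) mod Q)).
Proof. intros. rewrite (Rs_perm _ _ f (shift_perm Q d H)). apply Rs_map. Qed.

Lemma prime_divisor_exists n : 1 < n -> exists l, prime l /\ (l | n).
Proof.
  intros Hn. assert (H : forall N : nat, forall n, 1 < n -> (Z.to_nat n <= N)%nat ->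
    exists l, prime l /\ (l | n)).
  { induction N; intros m Hm HN. lia.
    destruct (prime_dec m) as [Hp|Hp]. exists m. split; auto. apply Z.divide_refl.
    destruct (not_prime_divide m Hm Hp) as [k [Hk Hkm]].
    destruct (IHN k) as [l [Hl Hlk]]. lia. lia.
    exists l. split; auto. eapply Z.divide_trans; eauto. }
  eapply H; eauto.
Qed.

Lemma gcd1_iff x n : 1 <= n ->
  (Z.gcd x n = 1 <-> forall l, prime l -> (l | n) -> ~ (l | x)).
Proof.
  intros Hn. split.
  - intros Hg l Hl Hln Hlx.
    assert (Hd : (l | Z.gcd x n)) by (apply Z.gcd_greatest; auto).
    rewrite Hg in Hd. apply prime_ge_2 in Hl.
    apply Z.divide_pos_le in Hd; lia.
  - intros H. destruct (Z.eq_dec (Z.gcd x n) 1) as [|Hne]; auto.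
    pose proof (Z.gcd_nonneg x n).
    assert (Hgn : (Z.gcd x n | n)) by apply Z.gcd_divide_r.
    assert (Z.gcd x n <> 0). { intros Hz. apply Z.gcd_eq_0 in Hz. lia. }
    destruct (prime_divisor_exists (Z.gcd x n)) as [l [Hl Hlg]]. lia.
    exfalso. apply (H l Hl).
    eapply Z.divide_trans; eauto.
    eapply Z.divide_trans; eauto. apply Z.gcd_divide_l.
Qed.

Lemma In_div_zprod l x : In x l -> (x | zprod l).
Proof.
  induction l; simpl; intros H. contradiction.
  destruct H as [<-|H]. apply Z.divide_factor_l.
  apply Z.divide_mul_r. auto.
Qed.

Lemma prime_div_zprod l p : prime p -> (forall x, In x l -> prime x) ->
  (p | zprod l) -> In p l.
Proof.
  intros Hp Hl. induction l; simpl; intros H.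
  - apply prime_ge_2 in Hp. apply Z.divide_pos_le in H; lia.
  - destruct (prime_mult p Hp _ _ H) as [H1|H1].
    + left. symmetry. apply prime_div_prime; auto. apply Hl. simpl; auto.
    + right. apply IHl; auto. intros; apply Hl; simpl; auto.
Qed.

Lemma zprod_pos l : (forall x, In x l -> 1 <= x) -> 1 <= zprod l.
Proof.
  induction l; simpl; intros H. lia.
  assert (1 <= a) by auto. assert (1 <= zprod l) by auto. nia.
Qed.

Lemma primeb_true p : primeb p = true <-> prime p.
Proof. unfold primeb. destruct (prime_dec p); split; intros; auto; discriminate. Qed.

Lemma s_pos n : 1 <= s n.
Proof.
  unfold s. apply zprod_pos. intros x Hx. apply filter_In in Hx.
  destruct Hx as [Hx _]. apply In_zrange in Hx. lia.
Qed.

Lemma s_div n l : 1 <= n -> prime l ->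
  ((l | s n) <-> (l | n) /\ l mod 4 = 3 /\ l <> 3).
Proof.
  intros Hn Hl. unfold s. split.
  - intros H. apply prime_div_zprod in H; auto.
    + apply filter_In in H. destruct H as [_ H].
      repeat rewrite andb_true_iff in H. destruct H as [[[_ H1] H2] H3].
      apply Z.eqb_eq in H1. apply Z.eqb_eq in H2. apply negb_true_iff in H3.
      apply Z.eqb_neq in H3. split; auto. apply Z.mod_divide. pose proof (prime_ge_2 _ Hl). lia. auto.
    + intros x Hx. apply filter_In in Hx. destruct Hx as [_ Hb].
      repeat rewrite andb_true_iff in Hb. destruct Hb as [[[Hb _] _] _].
      apply primeb_true; auto.
  - intros [H1 [H2 H3]]. apply In_div_zprod. apply filter_In. split.
    + apply In_zrange. apply prime_ge_2 in Hl. apply Z.divide_pos_le in H1; lia.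
    + repeat rewrite andb_true_iff. repeat split.
      apply primeb_true; auto.
      apply Z.eqb_eq. apply Z.mod_divide. pose proof (prime_ge_2 _ Hl). lia. auto.
      apply Z.eqb_eq; auto.
      apply negb_true_iff. apply Z.eqb_neq; auto.
Qed.

Definition goodp (Wv b l c : Z) : Prop :=
  ~ (l | Wv * c + b) /\ (l mod 4 = 3 -> l <> 3 -> ~ (l | Wv * c + b - 1)).

Definition Pb (Wv b n c : Z) : bool :=
  (Z.gcd (Wv * c + b) n =? 1) && (Z.gcd (Wv * c + b - 1) (s n) =? 1).

Lemma Pb_iff Wv b n c : 1 <= n ->
  (Pb Wv b n c = true <-> forall l, prime l -> (l | n) -> goodp Wv b l c).
Proof.
  intros Hn. unfold Pb. rewrite andb_true_iff, !Z.eqb_eq.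
  rewrite (gcd1_iff _ _ Hn), (gcd1_iff _ _ (s_pos n)). unfold goodp. split.
  - intros [H1 H2] l Hl Hln. split. auto. intros H3 H4. apply H2; auto.
    apply s_div; auto.
  - intros H. split. intros l Hl Hln. apply (H l Hl Hln).
    intros l Hl Hls. apply s_div in Hls; auto. destruct Hls as [A [B C]].
    apply (H l Hl A); auto.
Qed.

Lemma goodp_shift Wv b l c c' : (l | Wv * (c' - c)) -> goodp Wv b l c -> goodp Wv b l c'.
Proof.
  intros Hd [H1 H2]. split.
  - intros H. apply H1. replace (Wv * c + b) with ((Wv * c' + b) - Wv * (c' - c)) by ring.
    apply Z.divide_sub_r; auto.
  - intros A B H. apply (H2 A B). replace (Wv * c + b - 1) with ((Wv * c' + b - 1) - Wv * (c' - c)) by ring.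
    apply Z.divide_sub_r; auto.
Qed.

Lemma Pb_shift Wv b n c c' : 1 <= n ->
  (forall l, prime l -> (l | n) -> (l | Wv * (c' - c))) -> Pb Wv b n c' = Pb Wv b n c.
Proof.
  intros Hn H. apply eq_true_iff_eq. rewrite !Pb_iff by auto. split.
  - intros G l Hl Hln. apply goodp_shift with c'. 
    replace (c - c') with (- (c' - c)) by ring. rewrite Z.mul_opp_r.
    apply Z.divide_opp_r. auto. auto.
  - intros G l Hl Hln. apply goodp_shift with c; auto.
Qed.

Lemma valuation p n : prime p -> 1 <= n ->
  exists (k : nat) M, n = p ^ Z.of_nat k * M /\ ~ (p | M).
Proof.
  intros Hp. pose proof (prime_ge_2 _ Hp).
  assert (H1 : forall N : nat, forall n, 1 <= n -> (Z.to_nat n <= N)%nat ->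
    exists (k : nat) M, n = p ^ Z.of_nat k * M /\ ~ (p | M)).
  { induction N; intros m Hm HN. lia.
    destruct (Zdivide_dec p m) as [[m' Hm']|Hnd].
    - destruct (IHN m') as [k [M [E HM]]]. nia. nia.
      exists (S k), M. split; auto. rewrite Nat2Z.inj_succ, Z.pow_succ_r by lia.
      rewrite Hm', E. ring.
    - exists O, m. split; auto. change (Z.of_nat 0) with 0. rewrite Z.pow_0_r. ring. }
  intros Hn. eapply H1; eauto.
Qed.

Lemma W_notdiv J w p : (1 <= J)%nat -> prime p -> ~ (p | W J w) ->
  5 <= p /\ Int_part w < p.
Proof.
  intros HJ Hp Hnd. pose proof (prime_ge_2 _ Hp).
  assert (HU : (2 | W J w) /\ (3 | W J w)).
  { unfold W, U. split.
    - apply Z.divide_mul_l. apply Z.divide_mul_l.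
      replace (Z.of_nat J) with (Z.succ (Z.of_nat (J - 1))) by lia.
      rewrite Z.pow_succ_r by lia. apply Z.divide_factor_l.
    - apply Z.divide_mul_l. apply Z.divide_mul_r. exists 9. reflexivity. }
  assert (5 <= p).
  { destruct (Z.eq_dec p 2) as [->|]. tauto.
    destruct (Z.eq_dec p 3) as [->|]. tauto.
    destruct (Z.eq_dec p 4) as [->|].
    exfalso. apply prime_alt in Hp. destruct Hp as [_ Hp]. apply (Hp 2). lia. exists 2; reflexivity.
    lia. }
  split; auto. destruct (Z_lt_le_dec (Int_part w) p) as [|Hle]; auto.
  exfalso. apply Hnd. unfold W. apply Z.divide_mul_r. apply In_div_zprod.
  apply filter_In. split. apply In_zrange. lia. apply primeb_true; auto.
Qed.

Lemma e_shift Q q a d c : 1 <= Q -> 0 < q -> (q | Q) ->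
  e (IZR a / IZR q * IZR ((c + d) mod Q)) =
  (e (IZR a / IZR q * IZR d) * e (IZR a / IZR q * IZR c))%C.
Proof.
  intros HQ Hq [k Hk].
  assert (E : (c + d) mod Q = c + d - (c + d) / Q * k * q).
  { rewrite Zmod_eq_full by lia. rewrite Hk at 2. ring. }
  rewrite E. set (t := (c + d) / Q).
  assert (Hq' : IZR q <> 0%R) by (apply IZR_neq; lia).
  replace (IZR a / IZR q * IZR (c + d - t * k * q))%R with
    (IZR a / IZR q * IZR d + IZR a / IZR q * IZR c + IZR (- (a * t * k)))%R.
  - rewrite !e_add, e_int. ring.
  - rewrite minus_IZR, plus_IZR, opp_IZR, !mult_IZR. field. auto.
Qed.

Lemma C_fix_zero (z S : C) : z <> RtoC 1 -> S = (z * S)%C -> S = RtoC 0.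
Proof.
  intros Hz HS.
  assert (H1 : (RtoC 1 - z)%C <> RtoC 0).
  { intros H. apply Hz. replace z with (RtoC 1 - (RtoC 1 - z))%C by ring. rewrite H. ring. }
  replace S with (/ (RtoC 1 - z) * ((RtoC 1 - z) * S))%C.
  - replace ((RtoC 1 - z) * S)%C with (S - z * S)%C by ring. rewrite <- HS.
    replace (S - S)%C with (RtoC 0) by ring. ring.
  - rewrite Cmult_assoc, Cinv_l by auto. ring.
Qed.

Lemma sum_zero (Q q a d : Z) (g : Z -> bool) :
  1 <= Q -> 0 < q -> (q | Q) ->
  (forall c, In c (zrange 0 Q) -> g ((c + d) mod Q) = g c) ->
  e (IZR a / IZR q * IZR d) <> RtoC 1 ->
  Csum (zrange 0 Q) (fun c => if g c then e (IZR a / IZR q * IZR c) else RtoC 0) = RtoC 0.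
Proof.
  intros HQ Hq HqQ Hg Hz.
  apply (C_fix_zero _ _ Hz).
  rewrite (Csum_shift Q d) at 1 by auto.
  rewrite <- Csum_scal. apply Csum_ext. intros c Hc.
  rewrite Hg by auto. destruct (g c).
  - apply e_shift; auto.
  - ring.
Qed.

Lemma mod_eq_of_div p x y : 0 < p -> (p | x - y) -> x mod p = y mod p.
Proof.
  intros Hp [k Hk]. replace x with (y + k * p) by lia. apply Z_mod_plus_full.
Qed.

Lemma mod_add_eq p x v : 0 <= x < p -> 0 <= v < p -> ((x + v) mod p = v <-> x = 0).
Proof.
  intros Hx Hv. split.
  - intros H. pose proof (Z.div_mod (x + v) p ltac:(lia)).
    rewrite H in H0. assert (x = p * ((x + v) / p)) by lia.
    assert (0 <= (x + v) / p < 1) by nia. nia.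
  - intros ->. simpl. apply Z.mod_small. lia.
Qed.

Lemma div_shift_diff l Q c d : 1 <= Q -> (l | d) -> (l | Q) -> (l | (c + d) mod Q - c).
Proof.
  intros HQ Hd HlQ. rewrite Zmod_eq_full by lia.
  replace (c + d - (c + d) / Q * Q - c) with (d - (c + d) / Q * Q) by ring.
  apply Z.divide_sub_r; auto. apply Z.divide_mul_r; auto.
Qed.

Lemma Rs_indic_one l x : NoDup l -> In x l -> Rs l (fun v => if x =? v then 1%R else 0%R) = 1%R.
Proof.
  induction 1; simpl; intros Hin. contradiction.
  destruct Hin as [<-|Hin].
  - rewrite Z.eqb_refl. rewrite (Rs_ext _ _ (fun _ => 0%R)). rewrite Rs_const. ring.
    intros y Hy. destruct (Z.eqb_spec x0 y); subst; tauto.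
  - destruct (Z.eqb_spec x x0). subst; tauto. rewrite IHNoDup; auto. ring.
Qed.

Lemma goodp_p Wv b p c : prime p -> 5 <= p ->
  (goodp Wv b p c <-> (Wv * c + b) mod p <> 0 /\ (p mod 4 = 3 -> (Wv * c + b) mod p <> 1)).
Proof.
  intros Hp H5. unfold goodp. rewrite <- Z.mod_divide by lia.
  assert (E : (p | Wv * c + b - 1) <-> (Wv * c + b) mod p = 1).
  { split.
    - intros [k Hk]. replace (Wv * c + b) with (1 + k * p) by lia.
      rewrite Z_mod_plus_full. apply Z.mod_small. lia.
    - intros H. pose proof (Z.div_mod (Wv * c + b) p ltac:(lia)). exists ((Wv * c + b) / p). lia. }
  rewrite E. split; intros [A B]; split; auto. intros C. apply B; auto. lia.
Qed.

Lemma prime_div_pow l p (k : nat) : prime l -> prime p -> (l | p ^ Z.of_nat k) -> l = p.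
Proof.
  intros Hl Hp. induction k; intros H.
  - change (Z.of_nat 0) with 0 in H. rewrite Z.pow_0_r in H.
    apply prime_ge_2 in Hl. apply Z.divide_pos_le in H; lia.
  - rewrite Nat2Z.inj_succ, Z.pow_succ_r in H by lia.
    destruct (prime_mult l Hl _ _ H) as [H1|H1]; auto.
    apply prime_div_prime; auto.
Qed.

Lemma Cmod_3 (x y z : C) : (Cmod (x - y - z)%C <= Cmod x + Cmod y + Cmod z)%R.
Proof.
  unfold Cminus. eapply Rle_trans. apply Cmod_triangle. rewrite Cmod_opp.
  eapply Rle_trans. apply Rplus_le_compat_r. apply Cmod_triangle. rewrite Cmod_opp. lra.
Qed.

Lemma Cmod_Csum_ind l (g : Z -> bool) (h : Z -> R) :
  (Cmod (Csum l (fun c => if g c then e (h c) else RtoC 0)) <= Rs l (fun c => if g c then 1 else 0))%R.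
Proof.
  eapply Rle_trans. apply Cmod_Csum. apply Rs_le. intros x. destruct (g x).
  rewrite Cmod_e; lra. rewrite Cmod_0; lra.
Qed.

Lemma final_ineq (w P : R) : (100 <= w)%R -> (w < P)%R -> (2 <= Rpower w (- (1 / 2)) * (P - 2))%R.
Proof.
  intros Hw HP. rewrite Rpower_Ropp. replace (1 / 2)%R with (/ 2)%R by field.
  rewrite Rpower_sqrt by lra.
  pose proof (sqrt_sqrt w ltac:(lra)) as Hs. pose proof (sqrt_pos w) as Hs0.
  set (s := sqrt w) in *.
  assert (10 <= s)%R by nra. assert (2 * s <= P - 2)%R by nra.
  apply Rmult_le_reg_l with s. lra. rewrite <- Rmult_assoc, Rinv_r by lra. lra.
Qed.

Lemma Int_part_lt (w : R) (p : Z) : Int_part w < p -> (w < IZR p)%R.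
Proof.
  intros H. unfold Int_part in H. destruct (archimed w) as [H1 _].
  assert (up w <= p) by lia. apply IZR_le in H0. lra.
Qed.

Lemma ten_aux (z : Z) (w : R) : 100 <= z -> (IZR z <= w)%R -> (100 <= w)%R.
Proof. intros H Hw. apply IZR_le in H. lra. Qed.
Lemma ten_pow_ge (w : R) : (IZR (10 ^ (10 ^ 10)) <= w)%R -> (100 <= w)%R.
Proof.
  intros Hw. apply (ten_aux (10 ^ (10 ^ 10)) w); auto.
  change 100 with (10 ^ 2). apply (Z.pow_le_mono_r 10 2 (10 ^ 10)). reflexivity. vm_compute. discriminate.
Qed.

Open Scope R_scope.

Theorem lemma4 (J : nat) (w : R) (b Q a q : Z) :
  (5 <= J)%nat ->
  IZR (10 ^ (10 ^ 10))%Z <= w ->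
  amenable (W J w) b ->
  (1 <= Q)%Z ->
  (0 < a)%Z -> (0 < q)%Z -> (q | Q)%Z -> Z.gcd a q = 1%Z -> q <> 1%Z ->
  Cmod (Csum (Qset (W J w) b Q) (fun c0 => e (IZR a / IZR q * IZR c0)))
    <= Rpower w (- (1 / 2)) * INR (length (Qset (W J w) b Q)).
Proof.
  intros HJ Hw _ HQ Ha Hq HqQ Hg Hq1.
  apply ten_pow_ge in Hw.
  destruct (prime_divisor_exists q) as [p [Hp Hpq]]. lia.
  pose proof (prime_ge_2 _ Hp) as Hp2.
  assert (Hpa : ~ (p | a)).
  { intros H. assert (Hd : (p | Z.gcd a q)%Z) by (apply Z.gcd_greatest; auto).
    rewrite Hg in Hd. apply Z.divide_pos_le in Hd; lia. }
  assert (HpQ : (p | Q)%Z) by (eapply Z.divide_trans; eauto).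
  destruct (valuation p Q Hp HQ) as [k [M [HQM HM]]].
  destruct (valuation p q Hp ltac:(lia)) as [m [N [HqN HN]]].
  assert (Hpk : (0 < p ^ Z.of_nat k)%Z) by (apply Z.pow_pos_nonneg; lia).
  assert (HM1 : (1 <= M)%Z) by nia.
  destruct m as [|m'].
  { exfalso. change (Z.of_nat 0) with 0%Z in HqN. rewrite Z.pow_0_r in HqN. apply HN.
    rewrite <- (Z.mul_1_l N), <- HqN. auto. }
  set (d := (p ^ Z.of_nat m' * M)%Z).
  assert (Hpm : (0 < p ^ Z.of_nat m')%Z) by (apply Z.pow_pos_nonneg; lia).
  assert (Hzeta : e (IZR a / IZR q * IZR d) <> RtoC 1).
  { intros H. apply e_one_int in H. destruct H as [z Hz].
    assert (Hq' : IZR q <> 0%R) by (apply IZR_neq; lia).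
    assert (E : (a * d = z * q)%Z).
    { apply eq_IZR. rewrite !mult_IZR. rewrite <- Hz. field. auto. }
    rewrite HqN in E. unfold d in E. rewrite Nat2Z.inj_succ, Z.pow_succ_r in E by lia.
    assert (E2 : (a * M = z * p * N)%Z).
    { apply (Z.mul_reg_l _ _ (p ^ Z.of_nat m')). lia. rewrite <- Z.mul_assoc in E. lia. }
    assert (Hd : (p | a * M)%Z) by (rewrite E2; exists (z * N)%Z; ring).
    destruct (prime_mult p Hp a M Hd); auto. }
  assert (HlM : forall l, prime l -> (l | Q)%Z -> l <> p -> (l | M)%Z).
  { intros l Hl HlQ Hlp. rewrite HQM in HlQ. destruct (prime_mult l Hl _ _ HlQ) as [H|H]; auto.
    exfalso. apply Hlp. apply (prime_div_pow l p k); auto. }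
  assert (HMl : forall l, (l | M)%Z -> (l | Q)%Z /\ (l | d)%Z).
  { intros l H. split. rewrite HQM. apply Z.divide_mul_r; auto.
    unfold d. apply Z.divide_mul_r; auto. }
  change (Qset (W J w) b Q) with (filter (Pb (W J w) b Q) (zrange 0 Q)).
  rewrite Csum_filter, length_filter_Rs.
  assert (Hpow : (0 < Rpower w (- (1 / 2)))%R) by (unfold Rpower; apply exp_pos).
  destruct (Zdivide_dec p (W J w)) as [HpW|HpW].
  -
    rewrite (sum_zero Q q a d); auto.
    + rewrite Cmod_0. apply Rmult_le_pos. lra. apply Rs_nonneg. intros; destruct Pb; lra.
    + intros c Hc. apply Pb_shift; auto. intros l Hl HlQ.
      destruct (Z.eq_dec l p) as [->|Hlp].
      * apply Z.divide_mul_l; auto.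
      * apply Z.divide_mul_r. apply div_shift_diff; auto. apply HMl; auto.
  - destruct (W_notdiv J w p ltac:(lia) Hp HpW) as [Hp5 Hpw].
    apply Int_part_lt in Hpw.
    set (Wv := W J w) in *.
    set (vv := fun c => ((Wv * c + b) mod p)%Z).
    assert (Hvv : forall c, (0 <= vv c < p)%Z) by (intros; apply Z.mod_pos_bound; lia).
    assert (Hdec : forall c, Pb Wv b Q c = Pb Wv b M c && negb (vv c =? 0)%Z
                     && negb ((p mod 4 =? 3)%Z && (vv c =? 1)%Z)).
    { intros c. apply eq_true_iff_eq. rewrite !andb_true_iff, !negb_true_iff.
      rewrite !Pb_iff by lia. split.
      - intros H. assert (Gp := H p Hp HpQ). apply goodp_p in Gp; auto.
        destruct Gp as [G1 G2]. split; [split|].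
        + intros l Hl HlM0. apply H; auto. apply (proj1 (HMl l HlM0)).
        + apply Z.eqb_neq; auto.
        + destruct (Z.eqb_spec (p mod 4) 3); simpl; auto. apply Z.eqb_neq; auto.
      - intros [[H1 H2] H3]. intros l Hl HlQ. destruct (Z.eq_dec l p) as [->|Hlp].
        + apply goodp_p; auto. split.
          * apply Z.eqb_neq in H2. exact H2.
          * intros H4. rewrite H4 in H3. simpl in H3. apply Z.eqb_neq in H3. exact H3.
        + apply H1; auto. }
    set (L := zrange 0 Q).
    set (f := fun c => e (IZR a / IZR q * IZR c)).
    assert (Hsplit : Csum L (fun c => if Pb Wv b Q c then f c else RtoC 0) =
      (Csum L (fun c => if Pb Wv b M c then f c else RtoC 0)
       - Csum L (fun c => if Pb Wv b M c && (vv c =? 0)%Z then f c else RtoC 0)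
       - Csum L (fun c => if (p mod 4 =? 3)%Z && Pb Wv b M c && (vv c =? 1)%Z then f c else RtoC 0))%C).
    { rewrite <- !Csum_minus. apply Csum_ext. intros c _. rewrite Hdec.
      destruct (Pb Wv b M c), (vv c =? 0)%Z eqn:E0, (vv c =? 1)%Z eqn:E1, (p mod 4 =? 3)%Z;
        simpl; try ring; exfalso; apply Z.eqb_eq in E0; apply Z.eqb_eq in E1; congruence. }
    assert (Hcount : Rs L (fun c => if Pb Wv b Q c then 1 else 0) =
      Rs L (fun c => if Pb Wv b M c then 1 else 0)
       - Rs L (fun c => if Pb Wv b M c && (vv c =? 0)%Z then 1 else 0)
       - Rs L (fun c => if (p mod 4 =? 3)%Z && Pb Wv b M c && (vv c =? 1)%Z then 1 else 0)).
    { rewrite <- !Rs_minus. apply Rs_ext. intros c _. rewrite Hdec.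
      destruct (Pb Wv b M c), (vv c =? 0)%Z eqn:E0, (vv c =? 1)%Z eqn:E1, (p mod 4 =? 3)%Z;
        simpl; try ring; exfalso; apply Z.eqb_eq in E0; apply Z.eqb_eq in E1; congruence. }
    assert (Hzero : Csum L (fun c => if Pb Wv b M c then f c else RtoC 0) = RtoC 0).
    { apply (sum_zero Q q a d); auto. intros c Hc. apply Pb_shift; auto. intros l Hl HlM0.
      apply Z.divide_mul_r. apply div_shift_diff; auto; apply HMl; auto. }
    pose (A := fun v => Rs L (fun c => if Pb Wv b M c && (vv c =? v)%Z then 1 else 0)).
    assert (HA : forall v, (0 <= v < p)%Z -> A v = A 0%Z).
    { intros v Hv.
      assert (Hrp : rel_prime p (Wv * M)).
      { apply prime_rel_prime; auto. intros H. destruct (prime_mult p Hp _ _ H); auto. }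
      destruct (rel_prime_bezout _ _ Hrp) as [u1 u2 Hb].
      set (t := (u2 * v)%Z).
      unfold A. rewrite (Rs_shift Q (M * t)) by lia. apply Rs_ext. intros c Hc. cbv beta.
      rewrite (Pb_shift _ _ M c ((c + M * t) mod Q)%Z) by
        first [lia | (intros l Hl HlM0; apply Z.divide_mul_r; apply div_shift_diff;
          [lia | apply Z.divide_mul_l; auto | apply (proj1 (HMl l HlM0))])].
      assert (Hv2 : vv ((c + M * t) mod Q)%Z = ((vv c + v) mod p)%Z).
      { unfold vv. rewrite Zplus_mod_idemp_l. apply mod_eq_of_div. lia.
        rewrite Zmod_eq_full by lia. set (sq := ((c + M * t) / Q)%Z).
        destruct HpQ as [Q' HQ']. rewrite HQ'.
        exists (- (v * u1) - Wv * sq * Q')%Z.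
        assert (E : (u2 * (Wv * M) = 1 - u1 * p)%Z) by lia.
        unfold t.
        replace (Wv * (c + M * (u2 * v) - sq * (Q' * p)) + b - (Wv * c + b + v))%Z
          with ((u2 * (Wv * M)) * v - Wv * sq * Q' * p - v)%Z by ring.
        rewrite E. ring. }
      rewrite Hv2. replace (((vv c + v) mod p =? v)%Z) with (vv c =? 0)%Z; [reflexivity|].
      apply eq_true_iff_eq. rewrite !Z.eqb_eq. symmetry.
      apply mod_add_eq; auto. }
    assert (HPbM : Rs L (fun c => if Pb Wv b M c then 1 else 0) = IZR p * A 0%Z).
    { transitivity (Rs L (fun c => Rs (zrange 0 p)
                     (fun v => if Pb Wv b M c && (vv c =? v)%Z then 1 else 0))).
      - apply Rs_ext. intros c _. destruct (Pb Wv b M c); simpl.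
        + symmetry. apply Rs_indic_one. apply NoDup_zrange. apply In_zrange. specialize (Hvv c). lia.
        + rewrite Rs_const. ring.
      - rewrite Rs_swap. rewrite (Rs_ext _ _ (fun _ => A 0%Z)).
        + rewrite Rs_const, zrange_length, INR_IZR_INZ, Z2Nat.id by lia. ring.
        + intros v Hv. apply In_zrange in Hv. apply (HA v). lia. }
    assert (HA0 : 0 <= A 0%Z) by (apply Rs_nonneg; intros; destruct (_ && _); lra).
    assert (HA1 : A 1%Z = A 0%Z) by (apply HA; lia).
    assert (HR0 : Rs L (fun c => if (p mod 4 =? 3)%Z && Pb Wv b M c && (vv c =? 1)%Z then 1 else 0) <= A 1%Z).
    { apply Rs_le. intros c. destruct (p mod 4 =? 3)%Z, (Pb Wv b M c), (vv c =? 1)%Z; simpl; lra. }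
    assert (HR0' : 0 <= Rs L (fun c => if (p mod 4 =? 3)%Z && Pb Wv b M c && (vv c =? 1)%Z then 1 else 0))
      by (apply Rs_nonneg; intros; destruct (_ && _); lra).
    change (Cmod (Csum L (fun c => if Pb Wv b Q c then f c else RtoC 0)) <=
            Rpower w (- (1 / 2)) * Rs L (fun c => if Pb Wv b Q c then 1 else 0)).
    rewrite Hsplit, Hzero, Hcount, HPbM.
    eapply Rle_trans. apply Cmod_3. rewrite Cmod_0.
    assert (B1 : Cmod (Csum L (fun c => if Pb Wv b M c && (vv c =? 0)%Z then f c else RtoC 0))
                 <= A 0%Z) by apply Cmod_Csum_ind.
    assert (B2 : Cmod (Csum L (fun c => if (p mod 4 =? 3)%Z && Pb Wv b M c && (vv c =? 1)%Z then f c else RtoC 0))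
                 <= Rs L (fun c => if (p mod 4 =? 3)%Z && Pb Wv b M c && (vv c =? 1)%Z then 1 else 0))
      by apply Cmod_Csum_ind.
    pose proof (final_ineq w (IZR p) Hw Hpw) as Fin.
    set (R0 := Rs L (fun c => if (p mod 4 =? 3)%Z && Pb Wv b M c && (vv c =? 1)%Z then 1 else 0)) in *.
    set (Rp := Rpower w (- (1 / 2))) in *.
    change (Rs L (fun c => if Pb Wv b M c && (vv c =? 0)%Z then 1 else 0)) with (A 0%Z) in *.
    assert (Rp * (IZR p * A 0%Z - A 0%Z - R0) >= Rp * (IZR p - 2) * A 0%Z) by nra.
    nra.
Qed.
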